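(* Let $\mathcal T_p$ be a Tarski monster, $X$ a finite generating system of $\mathcal T_p$, $\mathcal K$ a proper non-trivial subgroup and $\Gamma=\mathrm{Sch}(\mathcal T_p,\mathcal K,X)$. Then the group $\mathrm{Aut}_X(\Gamma)$ of label-preserving automorphisms of $\Gamma$ is trivial and each orbit of $\mathrm{Aut}(\Gamma)$ on vertices is finite. In particular, $\Gamma$ is not almost transitive, and Tarski monsters are strongly simple.
   Context: For a prime $p$, a Tarski monster $\mathcal T_p$ is an infinite group every proper non-trivial subgroup of which is cyclic of order $p$. The Schreier graph $\mathrm{Sch}(\mathcal A,\mathcal K,X)$ has vertices the right cosets $\mathcal Kg$ and, for each coset and each $x$ with $x\in X$ or $x^{-1}\in X$, an edge labeled $x$ from $\mathcal Kg$ to $\mathcal Kgx$ whose inverse is the edge labeled $x^{-1}$ from $\mathcal Kgx$. $\mathrm{Aut}(\Gamma)$ is the group of all graph automorphisms (ignoring labels). A graph is almost transitive if there is a finite set $V_0$ of vertices such that every vertex can be mapped into $V_0$ by an automorphism. A finitely generated group $\mathcal A$ is strongly simple if for every generating system $X$ of size at most $\mathrm{rank}(\mathcal A)+1$ (rank = minimal number of generators) and every proper non-trivial subgroup $\mathcal H$, $\mathrm{Sch}(\mathcal A,\mathcal H,X)$ is not vertex-transitive. *)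

(* Defs.v *)
From Stdlib Require Import Arith List ZArith Znumtheory
  FunctionalExtensionality PropExtensionality.
Import ListNotations.
Set Implicit Arguments.

Record group := Group {
  gcar :> Type;
  gmul : gcar -> gcar -> gcar;
  gone : gcar;
  ginv : gcar -> gcar;
  gassoc : forall a b c, gmul a (gmul b c) = gmul (gmul a b) c;
  gmul1l : forall a, gmul gone a = a;
  gmul1r : forall a, gmul a gone = a;
  gmulVl : forall a, gmul (ginv a) a = gone;
  gmulVr : forall a, gmul a (ginv a) = gone }.

Section GroupDefs.
Variable G : group.

Fixpoint gpow (g : G) (n : nat) : G :=
  match n with O => gone G | S m => gmul G (gpow g m) g end.

Definition subgroup (H : G -> Prop) : Prop :=
  H (gone G) /\ (forall a b, H a -> H b -> H (gmul G a b)) /\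
  (forall a, H a -> H (ginv G a)).

Definition proper_sub (H : G -> Prop) : Prop := exists g, ~ H g.
Definition nontrivial_sub (H : G -> Prop) : Prop := exists h, H h /\ h <> gone G.

Definition cyclic_of_order (H : G -> Prop) (p : nat) : Prop :=
  exists g, (forall h, H h <-> exists n, h = gpow g n) /\
            gpow g p = gone G /\
            (forall k : nat, (0 < k < p)%nat -> gpow g k <> gone G).

Definition infinite_group : Prop := ~ exists l : list G, forall g, In g l.

Definition tarski_monster (p : nat) : Prop :=
  prime (Z.of_nat p) /\ infinite_group /\
  forall H, subgroup H -> proper_sub H -> nontrivial_sub H -> cyclic_of_order H p.

Definition generates (X : list G) : Prop :=
  forall H, subgroup H -> (forall x, In x X -> H x) -> forall g, H g.

Definition finitely_generated : Prop := exists X, generates X.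

Definition is_rank (r : nat) : Prop :=
  (exists X, generates X /\ length X = r) /\
  (forall X, generates X -> (r <= length X)%nat).

Lemma ginv_inv (x : G) : ginv G (ginv G x) = x.
Proof.
  rewrite <- (gmul1r G (ginv G (ginv G x))), <- (gmulVl G x), gassoc,
    gmulVl, gmul1l; reflexivity.
Qed.

Variable K : G -> Prop.

Definition rcoset (g : G) : G -> Prop := fun y => exists k, K k /\ y = gmul G k g.

Definition SchV : Type := { S : G -> Prop | exists g, S = rcoset g }.

Definition vset (v : SchV) (s : G) : G -> Prop :=
  fun y => exists z, proj1_sig v z /\ y = gmul G z s.

Lemma vset_coset (v : SchV) (s : G) : exists g, vset v s = rcoset g.
Proof.
  destruct v as [S [g ->]]; exists (gmul G g s); simpl.
  apply functional_extensionality; intro y; apply propositional_extensionality.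
  unfold vset, rcoset; simpl; split.
  - intros [z [[k [Hk ->]] ->]]; exists k; split; auto; now rewrite gassoc.
  - intros [k [Hk ->]]; exists (gmul G k g); split; [exists k; auto|].
    now rewrite gassoc.
Qed.

Definition vact (v : SchV) (s : G) : SchV := exist _ (vset v s) (vset_coset v s).

Variable X : list G.

Definition is_label (x : G) : Prop := In x X \/ In (ginv G x) X.
Definition Label : Type := { x : G | is_label x }.

Lemma is_label_inv (x : G) : is_label x -> is_label (ginv G x).
Proof. unfold is_label; rewrite ginv_inv; tauto. Qed.

Definition SchE : Type := (SchV * Label)%type.

Definition e_org (e : SchE) : SchV := fst e.
Definition e_ter (e : SchE) : SchV := vact (fst e) (proj1_sig (snd e)).
Definition e_label (e : SchE) : G := proj1_sig (snd e).
Definition e_inv (e : SchE) : SchE :=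
  (e_ter e, exist _ (ginv G (proj1_sig (snd e))) (is_label_inv (proj2_sig (snd e)))).

Definition bijective {A : Type} (f : A -> A) : Prop :=
  exists g : A -> A, (forall a, g (f a) = a) /\ (forall a, f (g a) = a).

Definition is_aut (fV : SchV -> SchV) (fE : SchE -> SchE) : Prop :=
  bijective fV /\ bijective fE /\
  forall e, e_org (fE e) = fV (e_org e) /\ e_ter (fE e) = fV (e_ter e) /\
            fE (e_inv e) = e_inv (fE e).

Definition label_preserving (fE : SchE -> SchE) : Prop :=
  forall e, e_label (fE e) = e_label e.

Definition vertex_transitive : Prop :=
  forall u v : SchV, exists fV fE, is_aut fV fE /\ fV u = v.

Definition almost_transitive : Prop :=
  exists V0 : list SchV, forall v, exists fV fE, is_aut fV fE /\ In (fV v) V0.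

Definition aut_orbit_finite (v : SchV) : Prop :=
  exists l : list SchV, forall fV fE, is_aut fV fE -> In (fV v) l.

End GroupDefs.

Arguments SchV {G} K.
Arguments SchE {G} K X.

Definition strongly_simple (G : group) : Prop :=
  finitely_generated G /\
  forall r, is_rank G r ->
  forall X : list G, NoDup X -> generates G X -> (length X <= r + 1)%nat ->
  forall H, subgroup G H -> proper_sub G H -> nontrivial_sub G H ->
  ~ @vertex_transitive G H X.

(* Main.v *)
Require Import Defs.
From Stdlib Require Import List Arith Lia ZArith Znumtheory FinFun
  Classical ClassicalEpsilon ProofIrrelevance FunctionalExtensionality PropExtensionality.
Import ListNotations.
Open Scope nat_scope.

Section Grp.
Variable G : group.
Local Infix "**" := (gmul G) (at level 40, left associativity).
Local Notation e := (gone G).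
Local Notation "x ^-1" := (ginv G x) (at level 2).

Lemma mulVK (z x : G) : z ** x^-1 ** x = z.
Proof. now rewrite <- gassoc, gmulVl, gmul1r. Qed.
Lemma mulKV (z x : G) : z ** x ** x^-1 = z.
Proof. now rewrite <- gassoc, gmulVr, gmul1r. Qed.

Lemma inv_unique (a b : G) : a ** b = e -> b = a^-1.
Proof.
  intro H. rewrite <- (gmul1l G b), <- (gmulVl G a), <- gassoc, H, gmul1r. reflexivity.
Qed.
Lemma inv_mul (a b : G) : (a ** b)^-1 = b^-1 ** a^-1.
Proof. symmetry; apply inv_unique. rewrite gassoc, mulKV, gmulVr; auto. Qed.
Lemma inv_one : e^-1 = e.
Proof. symmetry; apply inv_unique; apply gmul1l. Qed.
Lemma inv_eq1 (x : G) : x^-1 = e -> x = e.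
Proof. intro H. rewrite <- (ginv_inv G x), H, inv_one; auto. Qed.

Lemma conj_eq1 (c h : G) : c ** h ** c^-1 = e -> h = e.
Proof.
  intro E. assert (Hh : h = c^-1 ** (c ** h ** c^-1) ** c)
    by (rewrite !gassoc, gmulVl, gmul1l, mulVK; auto).
  rewrite Hh, E, gmul1r, gmulVl; auto.
Qed.

Lemma gpow_S_l (g : G) n : gpow G g (S n) = g ** gpow G g n.
Proof.
  induction n. simpl. now rewrite gmul1l, gmul1r.
  change (gpow G g (S n) ** g = g ** (gpow G g (S n))).
  rewrite IHn at 1. rewrite <- gassoc. reflexivity.
Qed.
Lemma gpow_1 (g : G) : gpow G g 1 = g.
Proof. simpl; apply gmul1l. Qed.
Lemma gpow_add (g : G) m n : gpow G g (m + n) = gpow G g m ** gpow G g n.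
Proof.
  induction n. simpl; now rewrite Nat.add_0_r, gmul1r.
  rewrite Nat.add_succ_r; simpl. rewrite IHn, gassoc; auto.
Qed.
Lemma gpow_mul (g : G) m n : gpow G g (m * n) = gpow G (gpow G g m) n.
Proof.
  induction n. rewrite Nat.mul_0_r; auto.
  rewrite Nat.mul_succ_r, gpow_add, IHn; auto.
Qed.
Lemma gpow_one1 n : gpow G (gone G) n = e.
Proof. induction n; simpl; auto. rewrite IHn; apply gmul1l. Qed.
Lemma gpow_mod (g : G) m n : m <> 0 -> gpow G g m = e -> gpow G g n = gpow G g (n mod m).
Proof.
  intros Hm H. rewrite (Nat.div_mod n m Hm) at 1.
  rewrite gpow_add, gpow_mul, H, gpow_one1, gmul1l; auto.
Qed.
Lemma conj_pow (c h : G) n : c ** gpow G h n ** c^-1 = gpow G (c ** h ** c^-1) n.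
Proof.
  induction n; simpl. now rewrite gmul1r, gmulVr.
  rewrite <- IHn. rewrite !gassoc, mulVK. reflexivity.
Qed.
Lemma gpow_inv (g : G) n : (gpow G g n)^-1 = gpow G (g^-1) n.
Proof.
  induction n; simpl. apply inv_one.
  rewrite inv_mul, IHn, <- gpow_S_l; auto.
Qed.
Lemma sub_pow (H : G -> Prop) g n : subgroup G H -> H g -> H (gpow G g n).
Proof.
  intros [H1 [HM HI]] Hg; induction n; simpl; auto.
Qed.

Variable p : nat.
Hypothesis Hp : prime (Z.of_nat p).
Lemma p_ge2 : 2 <= p.
Proof. pose proof (prime_ge_2 _ Hp); lia. Qed.

Lemma bezout_nat a : a mod p <> 0 -> exists b, (a * b) mod p = 1.
Proof.
  intro Ha. pose proof p_ge2.
  assert (Hlt : a mod p < p) by (apply Nat.mod_upper_bound; lia).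
  assert (Hr : rel_prime (Z.of_nat (a mod p)) (Z.of_nat p)).
  { apply rel_prime_le_prime; auto; lia. }
  destruct (rel_prime_bezout _ _ Hr) as [u v Huv].
  exists (Z.to_nat (u mod Z.of_nat p)).
  apply Nat2Z.inj.
  rewrite Nat2Z.inj_mod, Nat2Z.inj_mul, Z2Nat.id
    by (apply Z.mod_pos_bound; lia).
  rewrite Nat2Z.inj_mod in Huv.
  rewrite Zmult_mod_idemp_r, <- Zmult_mod_idemp_l, Z.mul_comm.
  replace (u * (Z.of_nat a mod Z.of_nat p))%Z with (1 + (-v) * Z.of_nat p)%Z by lia.
  rewrite Z_mod_plus_full. simpl. apply Z.mod_1_l. lia.
Qed.

Lemma cyc_elt_pow (H : G -> Prop) y : cyclic_of_order G H p -> H y -> gpow G y p = e.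
Proof.
  intros [g [Hg [Hgp _]]] Hy. apply Hg in Hy as [n ->].
  rewrite <- gpow_mul, Nat.mul_comm, gpow_mul, Hgp, gpow_one1; auto.
Qed.

Lemma cyc_gen (H : G -> Prop) h : cyclic_of_order G H p -> H h -> h <> e ->
  forall y, H y -> exists n, y = gpow G h n.
Proof.
  intros [g [Hg [Hgp _]]] Hh Hh1 y Hy. pose proof p_ge2.
  apply Hg in Hh as [a ->]. apply Hg in Hy as [m ->].
  assert (Ha : a mod p <> 0).
  { intro E. apply Hh1. rewrite (gpow_mod g p a) by (auto; lia). rewrite E; auto. }
  destruct (bezout_nat a Ha) as [b Hb].
  exists (b * m). rewrite <- gpow_mul, Nat.mul_assoc, gpow_mul.
  rewrite (gpow_mod g p (a * b)) by (auto; lia). rewrite Hb, gpow_1; auto.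
Qed.

Lemma cyc_list (H : G -> Prop) : cyclic_of_order G H p ->
  exists g, forall y, H y -> In y (map (gpow G g) (seq 0 p)).
Proof.
  intros [g [Hg [Hgp _]]]. pose proof p_ge2. exists g. intros y Hy.
  apply Hg in Hy as [n ->]. rewrite (gpow_mod g p n) by (auto; lia).
  apply in_map, in_seq. split; [lia|]. simpl. apply Nat.mod_upper_bound; lia.
Qed.

End Grp.

Section Grp2.
Variable G : group.
Local Infix "**" := (gmul G) (at level 40, left associativity).
Local Notation e := (gone G).
Local Notation "x ^-1" := (ginv G x) (at level 2).

Lemma mix (b : G) n m : exists k,
  gpow G b n ** gpow G (b^-1) m = gpow G b k \/ gpow G b n ** gpow G (b^-1) m = gpow G (b^-1) k.
Proof.
  revert m; induction n; intro m.
  - exists m; right; simpl; apply gmul1l.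
  - destruct m. exists (S n); left; simpl gpow at 2; apply gmul1r.
    rewrite (gpow_S_l _ (b^-1) m). change (gpow G b (S n)) with (gpow G b n ** b).
    rewrite gassoc, mulKV. apply IHn.
Qed.

Definition Pm (b : G) : G -> Prop := fun x => exists n, x = gpow G b n \/ x = gpow G (b^-1) n.

Lemma Pm_sub b : subgroup G (Pm b).
Proof.
  split; [|split].
  - exists 0; left; reflexivity.
  - intros x y [n [-> | ->]] [m [-> | ->]].
    + exists (n + m); left; symmetry; apply gpow_add.
    + apply mix.
    + destruct (mix (b^-1) n m) as [k [E|E]]; rewrite ginv_inv in E; exists k; rewrite E; auto.
    + exists (n + m); right; symmetry; apply gpow_add.
  - intros x [n [-> | ->]]; exists n.
    + right; apply gpow_inv.
    + left; rewrite gpow_inv, ginv_inv; auto.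
Qed.

Lemma inv_pow_m (c : G) m : m <> 0 -> gpow G c m = e -> c^-1 = gpow G c (m - 1).
Proof.
  intros Hm H. symmetry; apply inv_unique. rewrite <- gpow_S_l.
  replace (S (m - 1)) with m by lia; auto.
Qed.

Lemma Pm_list (c : G) m x : m <> 0 -> gpow G c m = e -> Pm c x ->
  In x (map (gpow G c) (seq 0 m)).
Proof.
  intros Hm H [n [-> | ->]].
  - rewrite (gpow_mod _ c m n) by auto. apply in_map, in_seq.
    split; [lia|]. simpl. apply Nat.mod_upper_bound; lia.
  - rewrite (inv_pow_m c m Hm H), <- gpow_mul.
    rewrite (gpow_mod _ c m) by auto. apply in_map, in_seq.
    split; [lia|]. simpl. apply Nat.mod_upper_bound; lia.
Qed.

Lemma not_all_in (P : G -> Prop) : infinite_group G -> ~ proper_sub G P ->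
  forall l, (forall x, P x -> In x l) -> False.
Proof.
  intros Hinf Hnp l Hl. apply Hinf. exists l. intro g. apply Hl.
  destruct (classic (P g)) as [|Hn]; auto. exfalso; apply Hnp; exists g; auto.
Qed.

Variable p : nat.
Hypothesis HT : tarski_monster G p.
Variable K : G -> Prop.
Hypothesis HK : subgroup G K.
Hypothesis HKp : proper_sub G K.
Hypothesis HKn : nontrivial_sub G K.

Lemma Kcyc : cyclic_of_order G K p.
Proof. destruct HT as [_ [_ H]]; auto. Qed.
Lemma pge2 : 2 <= p.
Proof. destruct HT as [Hp _]; apply (p_ge2 _ Hp). Qed.

Lemma all_pow_p (c : G) : gpow G c p = e.
Proof.
  destruct HT as [Hp [Hinf Htar]]. pose proof pge2.
  destruct (classic (c = e)) as [->|Hc]; [apply gpow_one1|].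
  destruct (classic (proper_sub G (Pm c))) as [Hpr|Hnp].
  - assert (Cy : cyclic_of_order G (Pm c) p).
    { apply Htar; [apply Pm_sub | auto | exists c; split; auto; exists 1; left; symmetry; apply gpow_1]. }
    apply (cyc_elt_pow _ _ _ _ Cy). exists 1; left; symmetry; apply gpow_1.
  - exfalso. destruct HKn as [k [Hk Hk1]].
    assert (Hkp : gpow G k p = e) by (apply (cyc_elt_pow _ _ K); auto; apply Kcyc).
    assert (Pk : Pm c k).
    { destruct (classic (Pm c k)) as [|Hn]; auto. exfalso; apply Hnp; exists k; auto. }
    destruct Pk as [n Hn].
    assert (Hn0 : n <> 0) by (intro; subst; destruct Hn; simpl in *; auto).
    assert (Hcm : gpow G c (n * p) = e).
    { rewrite gpow_mul. destruct Hn as [<- | E]; auto.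
      apply inv_eq1. rewrite !gpow_inv, <- E; auto. }
    apply (not_all_in (Pm c) Hinf Hnp (map (gpow G c) (seq 0 (n * p)))).
    intros x Hx. apply Pm_list; auto. nia.
Qed.

Lemma GL (k c : G) : K k -> k <> e -> K (c ** k ** c^-1) -> K c.
Proof.
  intros Hk Hk1 Hck.
  destruct HT as [Hp [Hinf Htar]]. pose proof pge2.
  pose proof HK as [K1 [KM KI]].
  assert (Hnrm : forall y, K y -> K (c ** y ** c^-1)).
  { intros y Hy. destruct (cyc_gen _ _ Hp K k Kcyc Hk Hk1 y Hy) as [n ->].
    rewrite conj_pow. apply sub_pow; auto. }
  assert (Hnrm2 : forall m y, K y -> K (gpow G c m ** y ** (gpow G c m)^-1)).
  { induction m; intros y Hy; simpl. rewrite inv_one, gmul1l, gmul1r; auto.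
    rewrite inv_mul.
    replace (gpow G c m ** c ** y ** (c^-1 ** (gpow G c m)^-1)) with
      (gpow G c m ** (c ** y ** c^-1) ** (gpow G c m)^-1) by (rewrite !gassoc; reflexivity).
    apply IHm. apply Hnrm; auto. }
  set (T := fun x => exists y m, K y /\ x = y ** gpow G c m).
  assert (HTs : subgroup G T).
  { split; [|split].
    - exists e, 0; split; auto; simpl; rewrite gmul1l; auto.
    - intros x1 x2 [y1 [a [Hy1 ->]]] [y2 [b [Hy2 ->]]].
      exists (y1 ** (gpow G c a ** y2 ** (gpow G c a)^-1)), (a + b). split; auto.
      rewrite gpow_add, !gassoc, mulVK. auto.
    - intros x [y [a [Hy ->]]].
      set (m := (p - 1) * a).
      assert (Em : (gpow G c a)^-1 = gpow G c m).
      { unfold m. rewrite gpow_inv, (inv_pow_m c p) by (auto; try lia; apply all_pow_p).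
        rewrite <- gpow_mul, Nat.mul_comm; auto. }
      exists (gpow G c m ** y^-1 ** (gpow G c m)^-1), m. split; auto.
      rewrite inv_mul, Em, mulVK. auto. }
  destruct (classic (proper_sub G T)) as [Hpr|Hnp].
  - assert (Tc : cyclic_of_order G T p).
    { apply Htar; auto. exists k; split; auto. exists k, 0; simpl; rewrite gmul1r; auto. }
    assert (Hc : T c) by (exists e, 1; split; auto; rewrite gpow_1, gmul1l; auto).
    assert (Hk' : T k) by (exists k, 0; simpl; rewrite gmul1r; auto).
    destruct (cyc_gen _ _ Hp T k Tc Hk' Hk1 c Hc) as [n ->]. apply sub_pow; auto.
  - exfalso. destruct (cyc_list _ _ Hp K Kcyc) as [g0 Hg0].
    apply (not_all_in T Hinf Hnp
      (flat_map (fun y => map (fun j => y ** gpow G c j) (seq 0 p)) (map (gpow G g0) (seq 0 p)))).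
    intros x [y [m [Hy ->]]]. apply in_flat_map. exists y. split; auto.
    rewrite (gpow_mod _ c p m) by (auto; try lia; apply all_pow_p).
    apply (in_map (fun j => y ** gpow G c j)), in_seq. split; [lia|]. simpl.
    apply Nat.mod_upper_bound; lia.
Qed.

End Grp2.

Section Sch.
Variable G : group.
Local Infix "**" := (gmul G) (at level 40, left associativity).
Local Notation e := (gone G).
Local Notation "x ^-1" := (ginv G x) (at level 2).
Variable p : nat.
Hypothesis HT : tarski_monster G p.
Variable K : G -> Prop.
Hypothesis HK : subgroup G K.
Hypothesis HKp : proper_sub G K.
Hypothesis HKn : nontrivial_sub G K.
Variable X : list G.
Hypothesis HX : generates G X.

Local Notation V := (SchV K).
Local Notation Ed := (SchE K X).
Local Notation Lab := (Label G X).

Lemma V_eq (u v : V) : proj1_sig u = proj1_sig v -> u = v.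
Proof. destruct u, v; simpl; intros ->; f_equal; apply proof_irrelevance. Qed.
Lemma Lab_eq (a b : Lab) : proj1_sig a = proj1_sig b -> a = b.
Proof. destruct a, b; simpl; intros ->; f_equal; apply proof_irrelevance. Qed.

Definition vtx (g : G) : V := exist _ (rcoset G K g) (ex_intro _ g eq_refl).

Lemma vtx_surj (v : V) : exists g, v = vtx g.
Proof. destruct v as [S [g E]]; exists g; apply V_eq; simpl; auto. Qed.

Lemma vact_vtx g s : vact (vtx g) s = vtx (g ** s).
Proof.
  apply V_eq; simpl.
  apply functional_extensionality; intro y; apply propositional_extensionality.
  unfold vset, rcoset; simpl; split.
  - intros [z [[k [Hk ->]] ->]]; exists k; split; auto; now rewrite gassoc.
  - intros [k [Hk ->]]; exists (k ** g); split; [exists k; auto|].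
    now rewrite gassoc.
Qed.

Lemma vtx_eq_K g1 g2 : vtx g1 = vtx g2 -> K (g1 ** g2^-1).
Proof.
  intro H. apply (f_equal (@proj1_sig _ _)) in H. simpl in H.
  assert (Hg : rcoset G K g2 g1) by (rewrite <- H; exists e; split; [apply HK | now rewrite gmul1l]).
  destruct Hg as [k [Hk ->]]. rewrite mulKV; auto.
Qed.

Lemma K_vtx_eq g1 g2 : K (g1 ** g2^-1) -> vtx g1 = vtx g2.
Proof.
  intro H. pose proof HK as [K1 [KM KI]]. apply V_eq; simpl.
  apply functional_extensionality; intro y; apply propositional_extensionality.
  unfold rcoset; split.
  - intros [k [Hk ->]]. exists (k ** (g1 ** g2^-1)); split; auto.
    rewrite !gassoc, mulVK; auto.
  - intros [k [Hk ->]]. exists (k ** (g1 ** g2^-1)^-1); split; auto.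
    rewrite inv_mul, ginv_inv, !gassoc, mulVK; auto.
Qed.

Fixpoint walk (v : V) (L : list Lab) : V :=
  match L with [] => v | a :: L' => walk (vact v (proj1_sig a)) L' end.
Fixpoint eval (L : list Lab) : G :=
  match L with [] => e | a :: L' => proj1_sig a ** eval L' end.

Lemma walk_vtx g L : walk (vtx g) L = vtx (g ** eval L).
Proof.
  revert g; induction L as [|a L IH]; intro g; simpl.
  - now rewrite gmul1r.
  - rewrite vact_vtx, IH, gassoc; auto.
Qed.

Lemma eval_app L1 L2 : eval (L1 ++ L2) = eval L1 ** eval L2.
Proof.
  induction L1; simpl. now rewrite gmul1l. rewrite IHL1, gassoc; auto.
Qed.

Definition linv (a : Lab) : Lab := exist _ ((proj1_sig a)^-1) (is_label_inv K (proj2_sig a)).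

Lemma eval_inv L : eval (rev (map linv L)) = (eval L)^-1.
Proof.
  induction L; simpl. symmetry; apply inv_one.
  rewrite eval_app, IHL, inv_mul; simpl. rewrite gmul1r; auto.
Qed.

Lemma connected g : exists L, eval L = g.
Proof.
  apply (HX (fun g => exists L, eval L = g)).
  - split; [|split].
    + exists []; auto.
    + intros a b [L1 <-] [L2 <-]. exists (L1 ++ L2); apply eval_app.
    + intros a [L <-]. exists (rev (map linv L)); apply eval_inv.
  - intros x Hx. exists [exist _ x (or_introl Hx) : Lab]; simpl; apply gmul1r.
Qed.

Definition dec_prop (P : Prop) : {P} + {~ P} := excluded_middle_informative P.

Definition lab_of (x : G) : list Lab :=
  match dec_prop (is_label G X x) with left H => [exist _ x H] | right _ => [] end.
Definition labels : list Lab := flat_map lab_of (X ++ map (ginv G) X).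

Lemma labels_all (a : Lab) : In a labels.
Proof.
  destruct a as [x Hx]. apply in_flat_map. exists x. split.
  - apply in_or_app. destruct Hx as [H|H]; [left; auto| right].
    rewrite <- (ginv_inv G x). apply in_map; auto.
  - unfold lab_of. destruct (dec_prop (is_label G X x)) as [H|H]; [|tauto].
    left; f_equal; apply proof_irrelevance.
Qed.

Fixpoint words (n : nat) : list (list Lab) :=
  match n with 0 => [[]] | S n => flat_map (fun L => map (fun a => a :: L) labels) (words n) end.

Lemma words_all L : In L (words (length L)).
Proof.
  induction L; simpl; auto. apply in_flat_map. exists L; split; auto.
  apply (in_map (fun a0 => a0 :: L)), labels_all.
Qed.

Definition trans (fE : Ed -> Ed) := fix tr (v : V) (L : list Lab) : list Lab :=
  match L with [] => [] | a :: L' => snd (fE (v, a)) :: tr (vact v (proj1_sig a)) L' end.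

Lemma trans_len fE v L : length (trans fE v L) = length L.
Proof. revert v; induction L; simpl; auto. Qed.

Lemma trans_walk (fV : V -> V) (fE : Ed -> Ed) v L : is_aut fV fE -> fV (walk v L) = walk (fV v) (trans fE v L).
Proof.
  intros [_ [_ Ha]]. revert v; induction L as [|a L IH]; intro v; simpl; auto.
  rewrite IH. f_equal. destruct (Ha (v, a)) as [Ho [Ht _]].
  unfold e_ter, e_org in *; simpl in *. rewrite <- Ht, Ho. auto.
Qed.

Lemma trans_inj (fV : V -> V) (fE : Ed -> Ed) v : is_aut fV fE -> Injective (trans fE v).
Proof.
  intros Haut. pose proof Haut as [_ [[gE [HgE _]] Ha]].
  intros L1 L2; revert v L2; induction L1 as [|a L1 IH]; intros v [|b L2]; simpl; try discriminate; auto.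
  intro H; injection H as H1 H2.
  assert (Hab : (v, a) = (v, b) :> Ed).
  { rewrite <- (HgE (v, a)), <- (HgE (v, b)). f_equal.
    destruct (Ha (v, a)) as [Ho1 _]; destruct (Ha (v, b)) as [Ho2 _].
    unfold e_org in *; simpl in *.
    destruct (fE (v, a)), (fE (v, b)); simpl in *; subst; auto. }
  injection Hab as ->. f_equal. apply (IH (vact v (proj1_sig b))); auto.
Qed.

Definition b0 : V := vtx e.

Lemma base_word : exists L0, walk b0 L0 = b0 /\ eval L0 <> e.
Proof.
  destruct HKn as [k [Hk Hk1]]. destruct (connected k) as [L0 HL].
  exists L0. split; auto. unfold b0. rewrite walk_vtx, HL, gmul1l.
  apply K_vtx_eq. rewrite inv_one, gmul1r; auto.
  rewrite HL; auto.
Qed.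

Lemma closed_unique u u' L : walk u L = u -> walk u' L = u' -> eval L <> e -> u = u'.
Proof.
  intros H1 H2 Hn. destruct (vtx_surj u) as [g ->]; destruct (vtx_surj u') as [g' ->].
  rewrite walk_vtx in H1, H2. apply vtx_eq_K in H1; apply vtx_eq_K in H2.
  apply K_vtx_eq. apply (GL G p HT K HK HKp HKn (g' ** eval L ** g'^-1)); auto.
  - intro E. apply Hn. apply (conj_eq1 _ g'); auto.
  - rewrite inv_mul, ginv_inv. rewrite !gassoc, !mulVK. auto.
Qed.


Lemma words_len n L : In L (words n) -> length L = n.
Proof.
  revert L; induction n; simpl; intros L H.
  - destruct H as [<-|[]]; auto.
  - apply in_flat_map in H as [L' [H1 H2]]. apply in_map_iff in H2 as [a [<- _]].
    simpl; f_equal; auto.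
Qed.

Definition dec_eq (x y : list Lab) : {x = y} + {x <> y} := dec_prop (x = y).

Lemma orbit_b0 L0 : walk b0 L0 = b0 -> eval L0 <> e ->
  forall (fV : V -> V) (fE : Ed -> Ed), is_aut fV fE ->
  exists L, length L = length L0 /\ walk (fV b0) L = fV b0 /\ eval L <> e.
Proof.
  intros HL0 HL0e fV fE Haut. apply NNPP; intro Hno.
  assert (Hall : forall L, length L = length L0 -> walk (fV b0) L = fV b0 -> eval L = e).
  { intros L H1 H2. apply NNPP; intro H3. apply Hno; exists L; auto. }
  set (n := length L0).
  set (A := nodup dec_eq (filter (fun L => if dec_prop (walk b0 L = b0) then true else false) (words n))).
  assert (inA : forall L, In L A <-> length L = n /\ walk b0 L = b0).
  { intro L. unfold A. rewrite nodup_In, filter_In. split.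
    - intros [H1 H2]. split; [apply words_len; auto|].
      destruct (dec_prop (walk b0 L = b0)); auto; discriminate.
    - intros [H1 H2]. split; [rewrite <- H1; apply words_all|].
      destruct (dec_prop (walk b0 L = b0)); auto. }
  assert (Hnd : NoDup (L0 :: map (trans fE b0) A)).
  { constructor.
    - intro H. apply in_map_iff in H as [L [HL HLA]]. apply inA in HLA as [Hl Hw].
      apply HL0e. rewrite <- HL. apply Hall. rewrite trans_len; auto.
      rewrite <- trans_walk, Hw; auto.
    - apply Injective_map_NoDup. apply (trans_inj fV); auto. apply NoDup_nodup. }
  assert (Hinc : incl (L0 :: map (trans fE b0) A) A).
  { intros L [<- | HL].
    - apply inA; auto.
    - apply in_map_iff in HL as [M [<- HM]]. apply inA in HM as [Hl Hw].
      apply inA. split; [rewrite trans_len; auto|].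
      assert (Hev : eval (trans fE b0 M) = e).
      { apply Hall. rewrite trans_len; auto. rewrite <- trans_walk, Hw; auto. }
      unfold b0 at 1. rewrite walk_vtx, Hev, gmul1l. auto. }
  pose proof (NoDup_incl_length Hnd Hinc). simpl in H. rewrite length_map in H. lia.
Qed.

Lemma trans_lp fE v L : label_preserving fE -> trans fE v L = L.
Proof.
  intro Hl. revert v; induction L as [|a L IH]; intro v; simpl; auto.
  rewrite IH. f_equal. apply Lab_eq. apply (Hl (v, a)).
Qed.

Lemma all_walk (v : V) : exists L, walk b0 L = v.
Proof.
  destruct (vtx_surj v) as [g ->]. destruct (connected g) as [L HL].
  exists L. unfold b0. rewrite walk_vtx, HL, gmul1l; auto.
Qed.

Lemma part1 (fV : V -> V) (fE : Ed -> Ed) : is_aut fV fE -> label_preserving fE ->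
  (forall v, fV v = v) /\ (forall e, fE e = e).
Proof.
  intros Haut Hl. destruct base_word as [L0 [HL0 HL0e]].
  assert (Hb : fV b0 = b0).
  { apply (closed_unique _ _ L0); auto.
    rewrite <- (trans_lp fE b0 L0 Hl), <- trans_walk, HL0; auto. }
  assert (Hv : forall v, fV v = v).
  { intro v. destruct (all_walk v) as [L <-].
    rewrite (trans_walk fV fE) by auto. rewrite trans_lp, Hb; auto. }
  split; auto. intros [v a].
  pose proof Haut as [_ [_ Ha]]. destruct (Ha (v, a)) as [Ho _].
  pose proof (Hl (v, a)) as Hla. unfold e_org, e_label in *; simpl in *.
  destruct (fE (v, a)) as [v' a']; simpl in *. rewrite Ho, Hv. f_equal. apply Lab_eq; auto.
Qed.

Definition Fl (n : nat) : list V :=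
  flat_map (fun L => match dec_prop (exists u, walk u L = u /\ eval L <> e) with
    | left H => [proj1_sig (constructive_indefinite_description _ H)]
    | right _ => [] end) (words n).

Lemma Fl_in u L : walk u L = u -> eval L <> e -> In u (Fl (length L)).
Proof.
  intros H1 H2. apply in_flat_map. exists L. split; [apply words_all|].
  destruct (dec_prop (exists u, walk u L = u /\ eval L <> e)) as [H|H].
  - destruct (constructive_indefinite_description _ H) as [u' [Hu' Hu'']]; simpl.
    left. apply (closed_unique _ _ L); auto.
  - exfalso; apply H; eauto.
Qed.

Lemma orbit_finite (v : V) : aut_orbit_finite X v.
Proof.
  destruct base_word as [L0 [HL0 HL0e]]. destruct (all_walk v) as [Lv <-].
  exists (flat_map (fun u => map (walk u) (words (length Lv))) (Fl (length L0))).
  intros fV fE Haut. apply in_flat_map. exists (fV b0). split.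
  - destruct (orbit_b0 L0 HL0 HL0e fV fE Haut) as [L [Hl [Hw He]]].
    rewrite <- Hl. apply Fl_in; auto.
  - rewrite (trans_walk fV fE) by auto. apply in_map. rewrite <- (trans_len fE b0 Lv). apply words_all.
Qed.

Lemma aut_inv (fV : V -> V) (fE : Ed -> Ed) : is_aut fV fE -> exists gV (gE : Ed -> Ed), is_aut gV gE /\ forall v, gV (fV v) = v.
Proof.
  intros [[gV [HV1 HV2]] [[gE [HE1 HE2]] Ha]]. exists gV, gE. split; auto.
  split; [exists fV; auto|]. split; [exists fE; auto|].
  intro ed. destruct (Ha (gE ed)) as [Ho [Ht Hi]]. rewrite HE2 in Ho, Ht, Hi.
  split; [|split].
  - rewrite Ho, HV1; auto.
  - rewrite Ht, HV1; auto.
  - rewrite <- Hi, HE1; auto.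
Qed.

Lemma not_almost : ~ almost_transitive G K X.
Proof.
  intros [V0 HV0].
  destruct HT as [Hp [Hinf _]].
  set (O := fun u => proj1_sig (constructive_indefinite_description _ (orbit_finite u))).
  assert (HO : forall u fV (fE : Ed -> Ed), is_aut fV fE -> In (fV u) (O u)).
  { intro u. unfold O. destruct (constructive_indefinite_description _ (orbit_finite u)); simpl; auto. }
  set (VL := flat_map O V0).
  assert (HVL : forall v, In v VL).
  { intro v. destruct (HV0 v) as [fV [fE [Haut Hin]]].
    destruct (aut_inv fV fE Haut) as [gV [gE [Hg Hgf]]].
    apply in_flat_map. exists (fV v). split; auto. pose proof (HO (fV v) gV gE Hg) as H; rewrite Hgf in H; exact H. }
  set (rep := fun u => proj1_sig (constructive_indefinite_description _ (vtx_surj u))).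
  assert (Hrep : forall u, u = vtx (rep u)).
  { intro u. unfold rep. destruct (constructive_indefinite_description _ (vtx_surj u)); auto. }
  destruct (cyc_list _ _ Hp K (Kcyc G p HT K HK HKp HKn)) as [g0 Hg0].
  apply Hinf. exists (flat_map (fun u => map (fun y => y ** rep u) (map (gpow G g0) (seq 0 p))) VL).
  intro g. apply in_flat_map. exists (vtx g). split; auto.
  assert (Hk : K (g ** (rep (vtx g))^-1)) by (apply vtx_eq_K; apply Hrep).
  replace g with (g ** (rep (vtx g))^-1 ** rep (vtx g)) at 1 by apply mulVK.
  apply (in_map (fun y => y ** rep (vtx g))). apply Hg0; auto.
Qed.

End Sch.

Theorem proposition6p8 (G : group) (p : nat) (HT : tarski_monster G p)
  (X : list G) (HX : generates G X)
  (K : G -> Prop) (HK : subgroup G K) (HKp : proper_sub G K)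
  (HKn : nontrivial_sub G K) :
  (forall (fV : SchV K -> SchV K) (fE : SchE K X -> SchE K X),
      @is_aut G K X fV fE -> @label_preserving G K X fE ->
      (forall v, fV v = v) /\ (forall e, fE e = e)) /\
  (forall v : SchV K, @aut_orbit_finite G K X v) /\
  ~ @almost_transitive G K X /\
  strongly_simple G.
Proof.
  split; [|split; [|split]].
  - intros fV fE Ha Hl. eapply part1; eauto.
  - intro v. eapply orbit_finite; eauto.
  - eapply not_almost; eauto.
  - split; [exists X; auto|].
    intros r _ X' _ HX' _ H HH HHp HHn Hvt.
    apply (not_almost G p HT H HH HHp HHn X' HX').
    exists [vtx G H (gone G)]. intro v.
    destruct (Hvt v (vtx G H (gone G))) as [fV [fE [Ha Hf]]].
    exists fV, fE. split; auto. rewrite Hf; left; auto.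
Qed.
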